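(* Under the assumptions in the context, the discrete solution set $\mathcal M^\delta:=\{u^\delta_\mu:\mu\in\mathcal P\}$ is a compact subset of $\widehat{\mathcal X^\delta}:=(B^1)^*(\mathcal Y^\delta)+\dots+(B^{Q_b})^*(\mathcal Y^\delta)\subset L_2(\Omega)$, where $u_\mu^\delta\in\mathcal X_\mu^\delta:=B_\mu^*(\mathcal Y^\delta)$ is the unique solution of $(u^\delta_\mu,B_\mu^*v)_{L_2(\Omega)}=f_\mu(v)$ for all $v\in\mathcal Y^\delta$.
   Context: Let $\Omega\subset\mathbb R^n$ be a bounded polyhedral Lipschitz domain with outward normal $\vec n$, and $\mathcal P\subset\mathbb R^p$ compact. For each $\mu\in\mathcal P$ let $\vec b_\mu\in C^1(\bar\Omega)^n$, $c_\mu\in C^0(\bar\Omega)$ with $c_\mu-\tfrac12\nabla\cdot\vec b_\mu\ge0$, with $\mu$-independent $\Gamma_\pm=\{z\in\partial\Omega:\vec b_\mu\cdot\vec n\gtrless0\}$, and such that $B_{\mu;\circ}^*w:=-\vec b_\mu\cdot\nabla w+w(c_\mu-\nabla\cdot\vec b_\mu)$ on $C^1_{\Gamma_+}(\Omega):=\{v\in C^0(\bar\Omega)\cap C^1(\Omega):v|_{\Gamma_+}=0\}$ is injective with dense range in $L_2(\Omega)$. Let $\mathcal Y_\mu$ be the closure of $C^1_{\Gamma_+}(\Omega)$ under $\|v\|_{\mathcal Y_\mu}:=\|B^*_{\mu;\circ}v\|_{L_2(\Omega)}$, $B_\mu^*$ the continuous extension, $\bar{\mathcal Y}:=\bigcap_\mu\mathcal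 Y_\mu$ (dense in each $\mathcal Y_\mu$) with norm $\|v\|_{\bar{\mathcal Y}}:=\sup_\mu\|v\|_{\mathcal Y_\mu}$. Assume affine decompositions $B_\mu^*=\sum_{q=1}^{Q_b}\theta_b^q(\mu)(B^q)^*$, $f_\mu=\sum_{q=1}^{Q_f}\theta_f^q(\mu)f^q$ with $\theta^q_b,\theta^q_f\in C^0(\mathcal P)$, $(B^q)^*\in\mathcal L(\bar{\mathcal Y},L_2(\Omega))$, $f^q\in\bar{\mathcal Y}'$, and $f_\mu\in\mathcal Y_\mu'$ for all $\mu$ with $\sup_\mu\|f_\mu\|_{\mathcal Y_\mu'}<\infty$. Let $\mathcal Y^\delta\subset\bar{\mathcal Y}$ be a $\mu$-independent finite-dimensional subspace; $\widehat{\mathcal X^\delta}$ is equipped with the $L_2(\Omega)$ inner product. *)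

(* Defs.v *)
From HB Require Import structures.
From mathcomp Require Import all_boot all_order all_algebra.
From mathcomp Require Import all_classical all_reals all_analysis.
Set Implicit Arguments. Unset Strict Implicit. Unset Printing Implicit Defensive.
Import Order.TTheory GRing.Theory Num.Theory.
Import numFieldNormedType.Exports.
Local Open Scope classical_set_scope.
Local Open Scope ring_scope.

Definition is_linear_map (R : realType) (U V : lmodType R) (f : U -> V) : Prop :=
  forall (a : R) (x y : U), f (a *: x + y) = a *: f x + f y.

Definition is_linear_form (R : realType) (U : lmodType R) (f : U -> R) : Prop :=
  forall (a : R) (x y : U), f (a *: x + y) = a * f x + f y.

(* A (real) inner product on H inducing the norm of H:
   this models L_2(Omega) with its L_2 inner product. *)
Definition inner_product_of_norm (R : realType) (H : normedModType R)
    (ip : H -> H -> R) : Prop :=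
  [/\ forall x y, ip x y = ip y x,
      forall (a : R) x y z, ip (a *: x + y) z = a * ip x z + ip y z
    & forall x, ip x x = `|x| ^+ 2].

Definition span_of (R : realType) (Y : lmodType R) (m : nat) (e : 'I_m -> Y)
  : set Y := [set v | exists c : 'I_m -> R, v = \sum_(i < m) c i *: e i].

(* Affine combination  B_mu^* v = sum_q theta_b^q(mu) (B^q)^* v. *)
Definition affine_op (R : realType) (p Q : nat) (Y H : lmodType R)
    (theta : 'I_Q -> 'rV[R]_p -> R) (B : 'I_Q -> Y -> H) (mu : 'rV[R]_p) (v : Y)
  : H := \sum_(q < Q) theta q mu *: B q v.

Definition affine_form (R : realType) (p Q : nat) (Y : lmodType R)
    (theta : 'I_Q -> 'rV[R]_p -> R) (f : 'I_Q -> Y -> R) (mu : 'rV[R]_p) (v : Y)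
  : R := \sum_(q < Q) theta q mu * f q v.

Definition X_delta (R : realType) (p Q : nat) (Y H : lmodType R)
    (theta : 'I_Q -> 'rV[R]_p -> R) (B : 'I_Q -> Y -> H) (Yd : set Y)
    (mu : 'rV[R]_p) : set H :=
  (affine_op theta B mu) @` Yd.

Definition Xhat_delta (R : realType) (Q : nat) (Y H : lmodType R)
    (B : 'I_Q -> Y -> H) (Yd : set Y) : set H :=
  [set u | exists w : 'I_Q -> Y, (forall q, Yd (w q)) /\ u = \sum_(q < Q) B q (w q)].

(* Main.v *)
Require Import Defs.
From HB Require Import structures.
From mathcomp Require Import all_boot all_order all_algebra.
From mathcomp Require Import all_classical all_reals all_analysis.
Import Order.TTheory GRing.Theory Num.Theory.
Import numFieldNormedType.Exports.
Local Open Scope classical_set_scope.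
Local Open Scope ring_scope.
From mathcomp Require Import ring lra.
Set Implicit Arguments. Unset Strict Implicit.
Section Alg.
Variable R : realType.

Lemma lin0 (Y H : lmodType R) (L : Y -> H) : is_linear_map L -> L 0 = 0.
Proof.
move=> hL; have := hL 1 0 0; rewrite !scale1r addr0 => h.
by apply: (@addrI _ (L 0)); rewrite addr0 -h.
Qed.

Lemma linZ (Y H : lmodType R) (L : Y -> H) a x : is_linear_map L -> L (a *: x) = a *: L x.
Proof. by move=> hL; have := hL a x 0; rewrite !addr0 (lin0 hL) addr0. Qed.

Lemma linD (Y H : lmodType R) (L : Y -> H) x y : is_linear_map L -> L (x + y) = L x + L y.
Proof. by move=> hL; have := hL 1 x y; rewrite !scale1r. Qed.

Lemma linB (Y H : lmodType R) (L : Y -> H) x y : is_linear_map L -> L (x - y) = L x - L y.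
Proof. by move=> hL; have := hL (-1) y x; rewrite !scaleN1r addrC => ->; rewrite addrC. Qed.

Lemma lin_sum (Y H : lmodType R) (L : Y -> H) k (c : 'I_k -> R) (x : 'I_k -> Y) :
  is_linear_map L -> L (\sum_(i < k) c i *: x i) = \sum_(i < k) c i *: L (x i).
Proof.
move=> hL; elim/big_rec2: _ => [|i y1 y2 _ <-]; first exact: lin0.
by rewrite linD // linZ.
Qed.

Lemma form_lin (Y : lmodType R) (f : Y -> R) : is_linear_form f -> is_linear_map (f : Y -> R^o).
Proof. by []. Qed.

Lemma form_sum (Y : lmodType R) (f : Y -> R) k (c : 'I_k -> R) (x : 'I_k -> Y) :
  is_linear_form f -> f (\sum_(i < k) c i *: x i) = \sum_(i < k) c i * f (x i).
Proof. by move=> hf; rewrite (@lin_sum _ R^o) //. Qed.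

Lemma form_B (Y : lmodType R) (f : Y -> R) x y : is_linear_form f -> f (x - y) = f x - f y.
Proof. by move=> hf; rewrite (@linB _ R^o). Qed.

Lemma affine_op_lin (p Q : nat) (Y H : lmodType R) (theta : 'I_Q -> 'rV[R]_p -> R) (B : 'I_Q -> Y -> H) mu :
  (forall q, is_linear_map (B q)) -> is_linear_map (affine_op theta B mu).
Proof.
move=> hB a x y; rewrite /affine_op scaler_sumr -big_split /=; apply: eq_bigr => q _.
by rewrite hB scalerDr !scalerA mulrC.
Qed.

Lemma affine_form_lin (p Q : nat) (Y : lmodType R) (theta : 'I_Q -> 'rV[R]_p -> R) (f : 'I_Q -> Y -> R) (mu : 'rV[R]_p) :
  (forall q, is_linear_form (f q)) -> is_linear_form (affine_form theta f mu).
Proof.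
move=> hf a x y; rewrite /affine_form mulr_sumr -big_split /=; apply: eq_bigr => q _.
by rewrite hf mulrDr !mulrA [theta q mu * a]mulrC.
Qed.

Lemma span_gen (Y : lmodType R) m (e : 'I_m -> Y) j : span_of e (e j).
Proof.
exists (fun i => (i == j)%:R); rewrite (bigD1 j) //= eqxx scale1r big1 ?addr0 //.
by move=> i /negbTE ->; rewrite scale0r.
Qed.

Lemma span_comb (Y : lmodType R) m (e : 'I_m -> Y) k (x : 'I_k -> Y) (d : 'I_k -> R) :
  (forall i, span_of e (x i)) -> span_of e (\sum_(i < k) d i *: x i).
Proof.
move=> hx; have [C hC] := choice hx.
exists (fun j => \sum_(i < k) d i * C i j).
under eq_bigr => i _ do rewrite hC scaler_sumr.
rewrite exchange_big /=; apply: eq_bigr => j _; rewrite scaler_suml.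
by apply: eq_bigr => i _; rewrite scalerA.
Qed.

Lemma span_sub (Y : lmodType R) m (e : 'I_m -> Y) k (x : 'I_k -> Y) v :
  (forall i, span_of e (x i)) -> span_of x v -> span_of e v.
Proof. by move=> hx [d ->]; apply: span_comb. Qed.

End Alg.
Section Ind.
Variable R : realType.

Definition indep (Y : lmodType R) k (x : 'I_k -> Y) :=
  forall d : 'I_k -> R, \sum_(i < k) d i *: x i = 0 -> forall i, d i = 0.

Lemma ord_cases m (j : 'I_m.+1) :
  (exists j' : 'I_m, j = widen_ord (leqnSn m) j') \/ j = ord_max.
Proof.
case: (ltnP j m) => h; first by left; exists (Ordinal h); apply: val_inj.
by right; apply: val_inj => /=; apply/eqP; rewrite eqn_leq h -ltnS ltn_ord.
Qed.

Lemma indep_basis (Y : lmodType R) m (e : 'I_m -> Y) :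
  exists k (e' : 'I_k -> Y), [/\ forall i, span_of e (e' i),
     forall j, span_of e' (e j) & indep e'].
Proof.
elim: m e => [|m IH] e.
  by exists 0, e; split => [[]|[]|d _ []].
pose e0 := fun i : 'I_m => e (widen_ord (leqnSn m) i).
have [k [e' [h1 h2 h3]]] := IH e0.
have e0e i : span_of e (e0 i) by apply: span_gen.
case: (pselect (span_of e' (e ord_max))) => hmax.
  exists k, e'; split => // [i|j].
    exact: span_sub (h1 i).
  by case: (ord_cases j) => [[j' ->]|->] //; apply: h2.
pose e'' := fun i : 'I_k.+1 =>
  if (insub (nat_of_ord i) : option 'I_k) is Some j then e' j else e ord_max.
have ew j : e'' (widen_ord (leqnSn k) j) = e' j by rewrite /e'' /= valK.
have em : e'' ord_max = e ord_max by rewrite /e'' insubF //= ltnn.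
have sp' j : span_of e'' (e' j) by rewrite -ew; apply: span_gen.
exists k.+1, e''; split => [i|j|d].
- case: (ord_cases i) => [[j ->]|->]; first by rewrite ew; apply: span_sub (h1 j).
  by rewrite em; apply: span_gen.
- case: (ord_cases j) => [[j' ->]|->]; last by rewrite -em; apply: span_gen.
  exact: span_sub (h2 j').
rewrite big_ord_recr /= em.
under eq_bigr => i _ do rewrite ew.
move=> hs.
have dm : d ord_max = 0.
  apply/eqP; apply: contraT => hd; exfalso; apply: hmax.
  exists (fun i => - (d ord_max)^-1 * d (widen_ord (leqnSn k) i)).
  have -> : e ord_max = - (d ord_max)^-1 *: \sum_(i < k) d (widen_ord (leqnSn k) i) *: e' i.
    move/eqP: hs; rewrite addr_eq0 => /eqP ->.
    by rewrite scalerN scaleNr opprK scalerA mulVf // scale1r.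
  by rewrite scaler_sumr; apply: eq_bigr => i _; rewrite scalerA.
move: hs; rewrite dm scale0r addr0 => hs i.
case: (ord_cases i) => [[j ->]|->] //.
exact: (h3 (fun j => d (widen_ord (leqnSn k) j)) hs j).
Qed.

End Ind.
Section LB.
Variable R : realType.

Lemma sum_cont (T : topologicalType) (V : normedModType R) k (f : 'I_k -> T -> V) :
  (forall i, continuous (f i)) -> continuous (fun t => \sum_(i < k) f i t).
Proof.
move=> hf t; apply: cvg_big => //; first exact: add_continuous.
by move=> i _; apply: hf.
Qed.

Lemma lower_bound (H : normedModType R) k (x : 'I_k -> H) : indep x ->
  exists2 kap, 0 < kap & forall d : 'rV[R]_k,
    kap * \sum_(i < k) `|d ord0 i| <= `|\sum_(i < k) d ord0 i *: x i|.
Proof.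
move=> hx; case: k x hx => [|k] x hx.
  by exists 1 => // d; rewrite big_ord0 mulr0.
pose nu (d : 'rV[R]_k.+1) := \sum_(i < k.+1) `|d ord0 i|.
pose phi (d : 'rV[R]_k.+1) := `|\sum_(i < k.+1) d ord0 i *: x i|.
have nuc : continuous nu.
  apply: sum_cont => i d.
  apply: (@continuous_comp _ _ _ (fun M : 'rV[R]_k.+1 => M ord0 i) Num.norm).
    exact: coord_continuous.
  exact: norm_continuous.
have phic : continuous phi.
  move=> d; apply: (@continuous_comp _ _ _ (fun d : 'rV[R]_k.+1 => \sum_(i < k.+1) d ord0 i *: x i) Num.norm); last exact: norm_continuous.
  apply: sum_cont => i {}d.
  apply: (@cvgZr_tmp R H _ (nbhs d) _ (fun M : 'rV[R]_k.+1 => M ord0 i) (d ord0 i) (x i)).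
  exact: (@coord_continuous R 1 k.+1 ord0 i d).
pose S := nu @^-1` [set 1].
have Scl : closed S.
  by apply: preimage_closed; [move=> ? _; exact: nuc | exact: closed_eq].
have Sco : compact S.
  have Kc := @rV_compact R k.+1 (fun=> `[-1, 1]%classic) (fun _ => @segment_compact R _ _).
  apply: (subclosed_compact Scl Kc).
  move=> d /= Sd i; rewrite /= in_itv /= -ler_norml.
  rewrite -Sd /nu (bigD1 i) //= lerDl; apply: sumr_ge0 => ? _; exact: normr_ge0.
have Sne : S !=set0.
  exists (\row_(j < k.+1) (j == ord0)%:R); rewrite /S /nu /= (bigD1 ord0) //= mxE eqxx normr1.
  by rewrite big1 ?addr0 // => j /negbTE hj; rewrite mxE hj normr0.
have [d0 d0S hmin] := compact_EVT_min Sne Sco (continuous_subspaceT phic).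
have nuZ (a : R) d : 0 <= a -> nu (a *: d) = a * nu d.
  move=> a0; rewrite /nu mulr_sumr; apply: eq_bigr => i _.
  by rewrite mxE normrM ger0_norm.
have phiZ (a : R) d : 0 <= a -> phi (a *: d) = a * phi d.
  move=> a0; rewrite /phi -[a in RHS](ger0_norm a0) -normrZ scaler_sumr; congr (`|_|).
  by apply: eq_bigr => i _; rewrite mxE scalerA.
have nu_ge0 d : 0 <= nu d by apply: sumr_ge0 => i _; exact: normr_ge0.
exists (phi d0).
  rewrite normr_gt0; apply/negP => /eqP h0.
  have := hx (fun i => d0 ord0 i) h0.
  move: d0S; rewrite inE /S /= /nu => h1 hz.
  by move: h1; rewrite big1 // => [/esym/eqP|i _]; [rewrite oner_eq0 | rewrite hz normr0].
move=> d; have [nd0|nd0] := eqVneq (nu d) 0.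
  by rewrite [X in _ * X]nd0 mulr0; exact: normr_ge0.
have ndp : 0 < nu d by rewrite lt_def nd0 nu_ge0.
have hS : (nu d)^-1 *: d \in S.
  by rewrite inE /S /= nuZ ?invr_ge0 ?nu_ge0 // mulVf.
have := hmin _ hS.
rewrite phiZ ?invr_ge0 ?nu_ge0 // mulrC => h.
by rewrite -ler_pdivlMr //; exact: h.
Qed.
End LB.
Section Key.
Variable R : realType.

Definition Xc (H : lmodType R) k (g : 'I_k -> H) (d : 'rV[R]_k) := \sum_(i < k) d ord0 i *: g i.
Definition nuc k (d : 'rV[R]_k) := \sum_(i < k) `|d ord0 i|.

Lemma nuc_ge0 k (d : 'rV[R]_k) : 0 <= nuc d.
Proof. by apply: sumr_ge0 => i _; exact: normr_ge0. Qed.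

Lemma coef_le k (d : 'rV[R]_k) i : `|d ord0 i| <= nuc d.
Proof.
by rewrite /nuc (bigD1 i) //= lerDl; apply: sumr_ge0 => ? _; exact: normr_ge0.
Qed.

Lemma Xc_bound (H : normedModType R) k (g : 'I_k -> H) d :
  `|Xc g d| <= nuc d * \sum_(i < k) `|g i|.
Proof.
rewrite /Xc mulr_sumr; apply: le_trans (ler_norm_sum _ _ _) _.
apply: ler_sum => i _; rewrite normrZ; apply: ler_wpM2r; [exact: normr_ge0 | exact: coef_le].
Qed.

Lemma XcB (H : lmodType R) k (g : 'I_k -> H) d d' : Xc g (d - d') = Xc g d - Xc g d'.
Proof. by rewrite /Xc -sumrB; apply: eq_bigr => i _; rewrite !mxE scalerBl. Qed.

Lemma Xc_subg (H : lmodType R) k (g g' : 'I_k -> H) d : Xc g d - Xc g' d = Xc (fun i => g i - g' i) d.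
Proof. by rewrite /Xc -sumrB; apply: eq_bigr => i _; rewrite scalerBr. Qed.

Lemma grp (V : zmodType) (x y z : V) : x - y = - (y - (x + z) + z).
Proof. by rewrite opprD opprB addrAC addrK. Qed.

Section IP.
Variables (H : normedModType R) (ip : H -> H -> R).
Hypothesis hip : inner_product_of_norm ip.

Lemma ip_sym x y : ip x y = ip y x. Proof. by case: hip. Qed.
Lemma ip_norm x : ip x x = `|x| ^+ 2. Proof. by case: hip. Qed.
Lemma ip_lin a x y z : ip (a *: x + y) z = a * ip x z + ip y z. Proof. by case: hip. Qed.
Lemma ip0l z : ip 0 z = 0.
Proof.
have := ip_lin 1 0 0 z; rewrite scale1r addr0 mul1r => h.
by apply: (@addrI _ (ip 0 z)); rewrite addr0 -h.
Qed.
Lemma ipDl x y z : ip (x + y) z = ip x z + ip y z.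
Proof. by rewrite -[x]scale1r ip_lin mul1r scale1r. Qed.
Lemma ipBl x y z : ip (x - y) z = ip x z - ip y z.
Proof.
by rewrite addrC -scaleN1r ip_lin mulN1r addrC.
Qed.
Lemma ipNl x z : ip (- x) z = - ip x z.
Proof. by rewrite -[- x]add0r ipBl ip0l add0r. Qed.
Lemma ipDr x y z : ip z (x + y) = ip z x + ip z y.
Proof. by rewrite ip_sym ipDl !(ip_sym z). Qed.

Lemma ip_le x y : ip x y <= `|x| * `|y|.
Proof.
have h1 : `|x + y| ^+ 2 = `|x| ^+ 2 + 2 * ip x y + `|y| ^+ 2.
  rewrite -!ip_norm ipDl !ipDr (ip_sym y x); ring.
have h2 : `|x - y| ^+ 2 = `|x| ^+ 2 - 2 * ip x y + `|y| ^+ 2.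
  rewrite -!ip_norm ipBl !ipDr !(ip_sym _ (- y)) !ipNl (ip_sym y x); ring.
have h3 : `|x + y| <= `|x| + `|y| by exact: ler_normD.
have h4 : `| `|x| - `|y| | <= `|x - y| by exact: ler_dist_dist.
have h5 : (`|x| - `|y|) ^+ 2 <= `|x - y| ^+ 2.
  rewrite -real_normK ?num_real //; apply: lerXn2r; rewrite ?nnegrE //; exact: normr_ge0.
have h6 : `|x + y| ^+ 2 <= (`|x| + `|y|) ^+ 2.
  apply: lerXn2r; rewrite ?nnegrE //; apply: addr_ge0; exact: normr_ge0.
have : 4 * ip x y <= 4 * (`|x| * `|y|).
  have -> : 4 * ip x y = `|x + y| ^+ 2 - `|x - y| ^+ 2 by rewrite h1 h2; ring.
  have -> : 4 * (`|x| * `|y|) = (`|x| + `|y|) ^+ 2 - (`|x| - `|y|) ^+ 2 by ring.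
  exact: lerB.
by rewrite ler_pM2l.
Qed.

Lemma ip_abs x y : `|ip x y| <= `|x| * `|y|.
Proof.
rewrite ler_norml ip_le andbT lerNl -ipNl -(normrN x); exact: ip_le.
Qed.

Lemma key k (gm gn : 'I_k -> H) (Fm Fn : 'I_k -> R) um un (c c' : 'rV[R]_k) kap :
  0 < kap -> (forall d, kap * nuc d <= `|Xc gm d|) ->
  um = Xc gm c -> un = Xc gn c' ->
  (forall d, ip um (Xc gm d) = \sum_(i < k) d ord0 i * Fm i) ->
  (forall d, ip un (Xc gn d) = \sum_(i < k) d ord0 i * Fn i) ->
  \sum_(i < k) `|gn i - gm i| + \sum_(i < k) `|Fn i - Fm i| <= kap / 2 ->
  `|um - un| <= (\sum_(i < k) `|gn i - gm i| + \sum_(i < k) `|Fn i - Fm i|)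
                 * (2 * (1 + `|um|) / kap + 2 * nuc c).
Proof.
move=> kap0 hkap hum hun Gm Gn.
set E1 := \sum_(i < k) `|gn i - gm i|; set E2 := \sum_(i < k) `|Fn i - Fm i|.
move=> hE.
have E1ge : 0 <= E1 by apply: sumr_ge0 => i _; exact: normr_ge0.
have E2ge : 0 <= E2 by apply: sumr_ge0 => i _; exact: normr_ge0.
pose d := c' - c.
pose s := Xc gn d - Xc gm d.
pose r := Xc gn c - Xc gm c.
have hs : `|s| <= nuc d * E1 by rewrite /s Xc_subg; exact: Xc_bound.
have hr : `|r| <= nuc c * E1 by rewrite /r Xc_subg; exact: Xc_bound.
pose a := `|Xc gn d|.
have age : 0 <= a by exact: normr_ge0.
have ndge := nuc_ge0 d; have ncge := nuc_ge0 c.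
have Uge : 0 <= `|um| by exact: normr_ge0.
have hd : kap * nuc d <= a + nuc d * E1.
  apply: le_trans (hkap d) _.
  have -> : Xc gm d = Xc gn d - s by rewrite /s opprB addrC subrK.
  apply: le_trans (ler_normB _ _) _; exact: lerD.
have hd2 : nuc d <= 2 / kap * a.
  rewrite mulrAC ler_pdivlMr //.
  have : nuc d * E1 <= nuc d * (kap / 2).
    by apply: ler_wpM2l => //; apply: le_trans hE; rewrite lerDl.
  lra.
have hF : `|\sum_(i < k) d ord0 i * Fn i - \sum_(i < k) d ord0 i * Fm i| <= nuc d * E2.
  have := Xc_bound (H := R^o) (fun i => Fn i - Fm i) d.
  rewrite /Xc -sumrB.
  move=> h; apply: le_trans h; rewrite le_eqVlt; apply/orP; left; apply/eqP.
  by congr (`|_|); apply: eq_bigr => i _; rewrite -mulrBr.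
have Xd : Xc gn d = un - Xc gn c by rewrite /d XcB hun.
have Xc_um : Xc gn c = um + r by rewrite /r hum addrC subrK.
have Xs : Xc gn d = Xc gm d + s by rewrite /s addrC subrK.
have ha2 : a ^+ 2 = (\sum_(i < k) d ord0 i * Fn i - \sum_(i < k) d ord0 i * Fm i)
                  - ip um s - ip r (Xc gn d).
  rewrite /a -ip_norm.
  rewrite {1}Xd ipBl Gn Xc_um ipDl {1}Xs ipDr Gm.
  ring.
have hum_s : - ip um s <= `|um| * (nuc d * E1).
  have h1 := ip_abs um s.
  have h2 : - ip um s <= `|ip um s| by rewrite -normrN; exact: ler_norm.
  have h3 : `|um| * `|s| <= `|um| * (nuc d * E1) by apply: ler_wpM2l.
  lra.
have hr_s : - ip r (Xc gn d) <= nuc c * E1 * a.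
  have h1 := ip_abs r (Xc gn d).
  have h2 : - ip r (Xc gn d) <= `|ip r (Xc gn d)| by rewrite -normrN; exact: ler_norm.
  have h3 : `|r| * a <= nuc c * E1 * a by apply: ler_wpM2r.
  rewrite -/a in h1; lra.
have hF' : \sum_(i < k) d ord0 i * Fn i - \sum_(i < k) d ord0 i * Fm i <= nuc d * E2.
  exact: le_trans (ler_norm _) hF.
pose t := 2 / kap.
have tge : 0 <= t by rewrite /t divr_ge0 // ltW.
set M0 := t * (1 + `|um|) + nuc c.
have ha : a <= (E1 + E2) * M0.
  have hsq : a * a <= a * ((E1 + E2) * M0).
    have -> : a * a = a ^+ 2 by rewrite expr2.
    rewrite ha2.
    have h1 : nuc d * E2 <= t * a * E2 by apply: ler_wpM2r => //; exact: hd2.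
    have h2 : `|um| * (nuc d * E1) <= `|um| * (t * a * E1).
      by apply: ler_wpM2l => //; apply: ler_wpM2r => //; exact: hd2.
    have -> : a * ((E1 + E2) * M0) = t * a * E2 + `|um| * (t * a * E1) + nuc c * E1 * a
       + (t * a * E1 + `|um| * t * a * E2 + nuc c * E2 * a) by rewrite /M0; ring.
    have h4 : 0 <= t * a * E1 + `|um| * t * a * E2 + nuc c * E2 * a.
      have p1 := mulr_ge0 (mulr_ge0 tge age) E1ge.
      have p2 := mulr_ge0 (mulr_ge0 (mulr_ge0 Uge tge) age) E2ge.
      have p3 := mulr_ge0 (mulr_ge0 ncge E2ge) age.
      lra.
    lra.
  have [a0|apos] := eqVneq a 0.
    rewrite a0; apply: mulr_ge0; first lra.
    have := mulr_ge0 tge (addr_ge0 ler01 Uge); rewrite /M0; lra.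
  have ap : 0 < a by rewrite lt_def apos age.
  by rewrite -(ler_pM2l ap).
have -> : um - un = - (Xc gn d + r).
  by rewrite Xd Xc_um; apply: grp.
rewrite normrN; apply: le_trans (ler_normD _ _) _.
have -> : 2 * (1 + `|um|) / kap = t * (1 + `|um|) by rewrite /t mulrAC.
have h5 : nuc c * E1 <= nuc c * (E1 + E2) by apply: ler_wpM2l => //; rewrite lerDl.
have : (E1 + E2) * (t * (1 + `|um|) + 2 * nuc c) = (E1 + E2) * M0 + nuc c * (E1 + E2).
  by rewrite /M0; ring.
move=> ->; rewrite -/a; lra.
Qed.
End IP.
End Key.
Unset Implicit Arguments. Set Strict Implicit.
Theorem corollary4p5
  (R : realType)
  (* H models L_2(Omega), with its inner product ip *)
  (H : normedModType R) (ip : H -> H -> R)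
  (hip : inner_product_of_norm ip)
  (* Ybar = intersection of the Y_mu, normed with sup_mu ||.||_{Y_mu} *)
  (Ybar : normedModType R)
  (* compact parameter set P in R^p *)
  (p : nat) (P : set 'rV[R]_p) (hP : compact P)
  (* affine decompositions *)
  (Qb Qf : nat)
  (theta_b : 'I_Qb -> 'rV[R]_p -> R) (theta_f : 'I_Qf -> 'rV[R]_p -> R)
  (htheta_b : forall q, {within P, continuous theta_b q})
  (htheta_f : forall q, {within P, continuous theta_f q})
  (B : 'I_Qb -> Ybar -> H)
  (hB_lin : forall q, is_linear_map (B q))
  (hB_cont : forall q, continuous (B q))
  (f : 'I_Qf -> Ybar -> R)
  (hf_lin : forall q, is_linear_form (f q))
  (hf_cont : forall q, continuous (f q))
  (* ||v||_{Y_mu} = ||B_mu^* v||_{L_2} is a norm: B_mu^* is injective *)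
  (hB_inj : forall mu, P mu -> injective (affine_op theta_b B mu))
  (* ||v||_{Ybar} = sup_mu ||B_mu^* v||_{L_2} *)
  (hYnorm : forall v : Ybar,
      `|v| = sup [set `|affine_op theta_b B mu v| | mu in P])
  (* f_mu in Y_mu' uniformly: sup_mu ||f_mu||_{Y_mu'} < oo *)
  (hf_bnd : exists C : R, forall mu, P mu -> forall v : Ybar,
      `|affine_form theta_f f mu v| <= C * `|affine_op theta_b B mu v|)
  (* mu-independent finite-dimensional subspace Y^delta of Ybar *)
  (m : nat) (e : 'I_m -> Ybar)
  (* discrete solutions u_mu^delta *)
  (u : 'rV[R]_p -> H)
  (hu : forall mu, P mu ->
      X_delta theta_b B (span_of e) mu (u mu) /\
      (forall v, span_of e v ->
         ip (u mu) (affine_op theta_b B mu v) = affine_form theta_f f mu v)) :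
  compact (u @` P) /\ u @` P `<=` Xhat_delta B (span_of e).
Proof.
have [k [e' [h1 h2 h3]]] := indep_basis e.
pose T := affine_op theta_b B.
have Tlin nu : is_linear_map (T nu) by apply: affine_op_lin.
have flin nu : is_linear_form (affine_form theta_f f nu) by apply: affine_form_lin.
pose g (nu : 'rV[R]_p) i := T nu (e' i).
pose Fv (nu : 'rV[R]_p) i := affine_form theta_f f nu (e' i).
have Tc nu (d : 'rV[R]_k) : T nu (\sum_(i < k) d ord0 i *: e' i) = Xc (g nu) d.
  by rewrite lin_sum.
have Fc nu (d : 'rV[R]_k) : affine_form theta_f f nu (\sum_(i < k) d ord0 i *: e' i)
    = \sum_(i < k) d ord0 i * Fv nu i.
  by rewrite form_sum.
have rep nu : P nu -> exists c : 'rV[R]_k, u nu = Xc (g nu) c.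
  move=> Pn; case: (hu nu Pn) => [[v sv <-] _].
  have [c ->] := span_sub h2 sv.
  exists (\row_i c i); rewrite -Tc; congr (T nu _).
  by apply: eq_bigr => i _; rewrite mxE.
have gal nu : P nu -> forall d : 'rV[R]_k, ip (u nu) (Xc (g nu) d) = \sum_(i < k) d ord0 i * Fv nu i.
  move=> Pn d; rewrite -Tc -Fc; apply: (hu nu Pn).2; apply: span_comb => i; exact: h1.
split; last first.
  move=> _ [mu muP <-]; case: (hu mu muP) => [[v sv <-] _].
  exists (fun q => theta_b q mu *: v); split => [q|].
    have [c ->] := sv; exists (fun i => theta_b q mu * c i).
    by rewrite scaler_sumr; apply: eq_bigr => i _; rewrite scalerA.
  by apply: eq_bigr => q _; rewrite linZ.
apply: continuous_compact hP.
rewrite continuous_subspace_in => mu; rewrite inE => muP.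
have [c hc] := rep mu muP.
have [kap kap0 hkap] : exists2 kap, 0 < kap & forall d : 'rV[R]_k,
    kap * \sum_(i < k) `|d ord0 i| <= `|\sum_(i < k) d ord0 i *: g mu i|.
  apply: lower_bound => d hd i; apply: h3 i.
  apply: (hB_inj mu muP); rewrite -[affine_op _ _ _]/(T mu) lin_sum // hd.
  by rewrite (lin0 (Tlin mu)).
pose F := nbhs (mu : subspace P).
have FF : ProperFilter F by apply: nbhs_subspace_filter.
have PF : F P.
  rewrite /F /nbhs /= -(nbhs_subspace_in muP); exact: withinT.
have gcvg i : (fun nu => g nu i) @ F --> g mu i.
  apply: cvg_big => //; first exact: add_continuous.
  move=> q _; apply: cvgZr_tmp; exact: (htheta_b q mu).
have Fcvg i : (fun nu => Fv nu i) @ F --> Fv mu i.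
  apply: cvg_big => //; first exact: add_continuous.
  move=> q _; apply: cvgMl; exact: (htheta_f q mu).
pose E nu := \sum_(i < k) `|g nu i - g mu i| + \sum_(i < k) `|Fv nu i - Fv mu i|.
have Ecvg : E @ F --> (0 : R).
  rewrite -[0 : R]addr0; apply: cvgD.
    rewrite [X in _ --> X](_ : (0 : R) = \sum_(i < k) (0 : R)); last by rewrite big1.
    apply: cvg_big => //; first exact: add_continuous.
    move=> i _; rewrite -(@normr0 R H) -(subrr (g mu i)); apply: cvg_norm.
    by apply: cvgB => //; exact: cvg_cst.
  rewrite [X in _ --> X](_ : (0 : R) = \sum_(i < k) (0 : R)); last by rewrite big1.
  apply: cvg_big => //; first exact: add_continuous.
  move=> i _; rewrite -(@normr0 R R) -(subrr (Fv mu i)); apply: cvg_norm.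
  by apply: cvgB => //; exact: cvg_cst.
pose M := 2 * (1 + `|u mu|) / kap + 2 * nuc c.
have M0 : 0 < M.
  rewrite /M; apply: ltr_wpDr; first by rewrite mulr_ge0 // nuc_ge0.
  by rewrite divr_gt0 // mulr_gt0 // ltr_wpDr.
apply/cvgrPdist_le => eps eps0.
have dpos : 0 < Num.min (kap / 2) (eps / M).
  by rewrite lt_min divr_gt0 // divr_gt0.
have HE : F (fun nu => E nu <= Num.min (kap / 2) (eps / M)).
  move/cvgr0Pnorm_le: Ecvg => /(_ _ dpos).
  by apply: filterS => nu; apply: le_trans; exact: ler_norm.
apply: (filterS2 _ _ PF HE) => nu Pn En.
have [c' hc'] := rep nu Pn.
move: En; rewrite le_min => /andP [En1 En2].
have := key hip kap0 hkap hc hc' (gal mu muP) (gal nu Pn) En1.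
move=> h; apply: le_trans h _.
by rewrite -ler_pdivlMr.
Qed.
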